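(* Let $g\ge2$, $d\ge2$, let $\sigma$ be a conjugacy class of $S_d$ of cycle type $(l_1)\cdots(l_m)$ with $\sum l_i=d$ and $\sum(l_i-1)=2g-2$, and let $(1^{a_1}2^{a_2}\cdots d^{a_d})$ be any cycle type of $S_d$. Then there is no pair $(\alpha,\beta)\in S_d\times S_d$ such that $\alpha\beta\alpha^{-1}\beta^{-1}\in\sigma$, $\langle\alpha,\beta\rangle$ is transitive, $\beta$ has cycle type $(1^{a_1}2^{a_2}\cdots d^{a_d})$, and both $\alpha$ and $\beta$ commute with the $d$-cycle $(12\cdots d)$.
   Context: $(1^{a_1}2^{a_2}\cdots d^{a_d})$ denotes the conjugacy class of permutations with $a_i$ cycles of length $i$, $\sum ia_i=d$. *)

(* Defs.v *)
From mathcomp Require Import all_boot all_fingroup.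
Set Implicit Arguments. Unset Strict Implicit. Unset Printing Implicit Defensive.
Local Open Scope group_scope.

(* Points 1..d are represented by 'I_d = {0,...,d-1}. *)

Definition cycle_type (T : finType) (s : {perm T}) : seq nat :=
  map (fun X : {set T} => #|X|) (enum (porbits s)).

Definition cycle_count (T : finType) (s : {perm T}) (i : nat) : nat :=
  #|[set X in porbits s | #|X| == i]|.

(* the standard d-cycle (1 2 ... d), i.e. i |-> i+1 mod d on 'I_d *)
Definition dcycle (d : nat) : 'S_d := perm (@ordS_inj d).

(* Main.v *)
Require Import Defs.
From mathcomp Require Import all_boot all_fingroup.
Local Open Scope group_scope.

Lemma dcycle_pow0 d (z : 'I_d) (hz : val z = 0%N) k :
  (k < d)%N -> val ((dcycle d ^+ k) z) = k.
Proof.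
elim: k => [|k IH] hk; first by rewrite expg0 perm1.
rewrite expgSr permM /dcycle permE /= IH ?(ltnW hk) //.
by rewrite modn_small.
Qed.

Lemma cent_dcycle d (z : 'I_d) (hz : val z = 0%N) (x : 'S_d) :
  commute x (dcycle d) -> x = dcycle d ^+ (x z).
Proof.
move=> cx; apply/permP => y.
have ey : y = (dcycle d ^+ y) z by apply/val_inj; rewrite dcycle_pow0.
have ex : x z = (dcycle d ^+ (x z)) z by apply/val_inj; rewrite dcycle_pow0.
have cxk : forall k, commute x (dcycle d ^+ k) by move=> k; apply: commuteX.
set k := x z in ex *.
rewrite {1}ey -permM -(cxk y) permM -/k {1}ex {2}ey -!permM -!expgD addnC //.
Qed.

Lemma card_porbit1 (T : finType) (x : T) : #|porbit 1 x| = 1%N.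
Proof.
have -> : porbit 1 x = [set x].
  apply/setP => y; rewrite inE; apply/porbitP/eqP => [[i ->]|->].
    by rewrite expg1n perm1.
  by exists 0%N; rewrite expg0 perm1.
by rewrite cards1.
Qed.

Theorem mainTheorem11 (g d : nat) (sigma : {set 'S_d}) (l : seq nat)
    (a : nat -> nat) :
  (2 <= g)%N -> (2 <= d)%N ->
  sigma \in classes [set: 'S_d] ->
  (forall x, x \in sigma -> perm_eq (cycle_type x) l) ->
  (\sum_(li <- l) li)%N = d ->
  (\sum_(li <- l) (li - 1))%N = (2 * g - 2)%N ->
  (\sum_(1 <= i < d.+1) i * a i)%N = d ->
  ~ (exists alpha beta : 'S_d,
      [/\ alpha * beta * alpha^-1 * beta^-1 \in sigma,
          [transitive <<[set alpha; beta]>>, on [set: 'I_d] | 'P],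
          (forall i, (1 <= i <= d)%N -> cycle_count beta i = a i),
          commute alpha (dcycle d)
        & commute beta (dcycle d)]).
Proof.
move=> hg hd _ hct _ hsum _ [alpha [beta [hs _ _ ca cb]]].
have d0 : (0 < d)%N by apply: leq_trans hd.
pose z : 'I_d := Ordinal d0.
have cab : commute alpha beta.
  rewrite (@cent_dcycle d z erefl alpha ca) (@cent_dcycle d z erefl beta cb).
  exact: commuteX2.
have h1 : alpha * beta * alpha^-1 * beta^-1 = 1.
  by rewrite cab mulgK mulgV.
rewrite h1 in hs.
have := hct _ hs => hp.
have : (\sum_(li <- l) (li - 1))%N = 0%N.
  rewrite -(perm_big _ hp) /cycle_type big_map big1_seq // => X /andP [_].
  rewrite mem_enum => /imsetP [x _ ->].
  by rewrite card_porbit1.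
rewrite hsum => /eqP; rewrite subn_eq0 leqNgt => /negP; apply.
by rewrite mul2n -addnn; apply: leq_trans (leq_add hg hg).
Qed.
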